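(* Let $G=(V,E)$ be an undirected graph with $|V|=n$, let $k\ge 1$, and assume that no set of $k$ vertices of $G$ dominates $G$. Construct the undirected graph $G'$ as follows: its vertex set consists of one node $x_S$ for every $k$-element subset $S\subseteq V$ together with one node $v'$ for every $v\in V$; the nodes $\{v' : v\in V\}$ form a clique; and $x_S$ is adjacent to $v'$ if and only if $S$ does not dominate $v$ in $G$ (i.e., $v\notin S$ and $v$ has no neighbor in $S$); there are no other edges. Then $G'$ has $\binom{n}{k}+n$ nodes and $O(n^{k+1})$ edges, and the diameter of $G'$ is $2$ if $G$ has no dominating set of size at most $2k$, and $3$ if $G$ has a dominating set of size at most $2k$.
   Context: A set $S\subseteq V$ dominates a vertex $v$ if $v\in S$ or $v$ is adjacent to some vertex of $S$; $S$ is a dominating set if it dominates every vertex. *)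

(* Defs.v *)
From mathcomp Require Import all_boot.
Set Implicit Arguments. Unset Strict Implicit. Unset Printing Implicit Defensive.

Section Defs.
Variable T : finType.
Variable adj : rel T.

Definition dominates (S : {set T}) (v : T) : bool :=
  (v \in S) || [exists u in S, adj u v].

Definition dominating (S : {set T}) : bool := [forall v, dominates S v].

Definition kset (k : nat) := {S : {set T} | #|S| == k}.

(* vertices of G' : inl S = x_S, inr v = v' *)
Definition Gp_vertex (k : nat) := (kset k + T)%type.

Definition Gp_adj (k : nat) : rel (Gp_vertex k) := fun a b =>
  match a, b with
  | inl _, inl _ => false
  | inl X, inr v => ~~ dominates (val X) v
  | inr v, inl X => ~~ dominates (val X) v
  | inr u, inr v => u != v
  end.
End Defs.

Section Graphs.
Variable V : finType.
Variable e : rel V.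

Definition edge_set : {set {set V}} := [set [set p.1; p.2] | p in [set q : V * V | e q.1 q.2]].

Definition walk_le (u v : V) (l : nat) : Prop :=
  exists p : seq V, [/\ size p <= l, path e u p & last u p = v].

(* the diameter (max over pairs of shortest-path distance) equals d *)
Definition diameter_is (d : nat) : Prop :=
  (forall u v, walk_le u v d) /\
  (exists u v, forall l, walk_le u v l -> d <= l).
End Graphs.

(* Main.v *)
Require Import Defs.
From mathcomp Require Import all_boot.
From mathcomp Require Import zify.

Lemma ffact_le n m : n ^_ m <= n ^ m.
Proof.
elim: m n => [|m IH] [|n].
all: try by rewrite ?ffactn0 ?expn0.
rewrite ffactSS expnS leq_mul2l; apply/orP; right; apply: leq_trans (IH n) _.
by case: m {IH} => [|m]; rewrite ?expn0 // leq_exp2r.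
Qed.
Lemma bin_le n m : 'C(n, m) <= n ^ m.
Proof.
apply: leq_trans (ffact_le n m); by rewrite -bin_ffact leq_pmulr ?fact_gt0.
Qed.
Lemma le_pow n k : 0 < k -> n <= n ^ k.
Proof.
case: n => // n Hk; rewrite -{1}(expn1 n.+1) leq_pexp2l //.
Qed.

Lemma ext_set (T : finType) (A B : {set T}) m :
  A \subset B -> #|A| <= m <= #|B| -> exists C : {set T},
  [/\ A \subset C, C \subset B & #|C| = m].
Proof.
move=> sAB /andP [].
move Hd: (m - #|A|) => d; elim: d A sAB Hd => [|d IH] A sAB Hd hA hB.
  by exists A; split=> //; apply/eqP; rewrite eqn_leq hA -subn_eq0 Hd.
have: #|A| < #|B|.
  by apply: (@leq_trans m) => //; rewrite -subn_gt0 Hd.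
move=> pAB.
have: A \proper B by rewrite properEcard sAB pAB.
case/properP => _ [x xB xA].
have := IH (x |: A); rewrite subUset sub1set xB sAB cardsU1 xA add1n.
case=> //.
- by rewrite subnS Hd.
- by rewrite -subn_gt0 Hd.
move=> C [sC1 sC2 cC]; exists C; split=> //.
by apply: subset_trans sC1; apply: subsetUr.
Qed.

Lemma walk_nil (V : finType) (e : rel V) u l : walk_le e u u l.
Proof. by exists [::]; split. Qed.

Lemma walk_lb (V : finType) (e : rel V) u v d :
  (forall p : seq V, size p < d -> path e u p -> last u p = v -> False) ->
  forall l, walk_le e u v l -> d <= l.
Proof.
move=> H l [p [sp pp lp]]; rewrite leqNgt; apply/negP => ld.
exact: (H p (leq_ltn_trans sp ld) pp lp).
Qed.

Lemma walk_le_mono (V : finType) (e : rel V) u v l l' :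
  walk_le e u v l -> l <= l' -> walk_le e u v l'.
Proof. by move=> [p [sp pp lp]] ll; exists p; split => //; apply: leq_trans ll. Qed.

Lemma dom_sub (T : finType) (adj : rel T) (A B : {set T}) w :
  A \subset B -> dominates adj A w -> dominates adj B w.
Proof.
move=> sAB; rewrite /dominates => /orP [wA|/existsP [u /andP [uA au]]].
  by rewrite (subsetP sAB _ wA).
by apply/orP; right; apply/existsP; exists u; rewrite (subsetP sAB _ uA).
Qed.

Lemma domU (T : finType) (adj : rel T) (A B : {set T}) w :
  dominates adj (A :|: B) w = dominates adj A w || dominates adj B w.
Proof.
apply/idP/idP.
  rewrite /dominates in_setU => /orP [/orP [->|->]|/existsP [u /andP [uAB au]]];
    rewrite ?orbT //.
  move: uAB; rewrite in_setU => /orP [uA|uB].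
    by apply/orP; left; apply/orP; right; apply/existsP; exists u; rewrite uA.
  by apply/orP; right; apply/orP; right; apply/existsP; exists u; rewrite uB.
by case/orP; apply: dom_sub; rewrite ?subsetUl ?subsetUr.
Qed.

Theorem mainTheorem3 (T : finType) (adj : rel T) (k : nat)
  (adj_sym : symmetric adj) (adj_irr : irreflexive adj)
  (k_ge1 : 1 <= k)
  (no_k_dom : forall S : {set T}, #|S| <= k -> ~~ dominating adj S) :
  #|{: Gp_vertex T k}| = 'C(#|T|, k) + #|T|
  /\ #|edge_set (@Gp_adj T adj k)| <= 2 * #|T| ^ k.+1
  /\ ((~ exists D : {set T}, #|D| <= 2 * k /\ dominating adj D) ->
        diameter_is (@Gp_adj T adj k) 2)
  /\ ((exists D : {set T}, #|D| <= 2 * k /\ dominating adj D) ->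
        diameter_is (@Gp_adj T adj k) 3).
Proof.
have card1 : #|{: Gp_vertex T k}| = 'C(#|T|, k) + #|T|.
  rewrite card_sum card_sig -card_draws; congr (_ + _).
  by apply: eq_card => S; rewrite inE.
set e := @Gp_adj T adj k.
have nd : forall X : @kset T k, exists w, ~~ dominates adj (val X) w.
  move=> X; have /no_k_dom : #|val X| <= k by rewrite (eqP (valP X)).
  by rewrite /dominating => /forallPn [w Hw]; exists w.
have gtk : k < #|T|.
  rewrite ltnNge; apply/negP => H; have /no_k_dom : #|[set: T]| <= k by rewrite cardsT.
  move/negP; apply; apply/forallP => v; by rewrite /dominates in_setT.
have near : forall u v, (exists a, u = inr a \/ v = inr a) -> walk_le e u v 2.
  move=> [X|a] [Y|b] [c Hc].
  - by case: Hc.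
  - have [w Hw] := nd X; case: (eqVneq w b) => [<-|wb].
      by exists [:: inr w]; split => //=; rewrite /e /= Hw.
    by exists [:: inr w; inr b]; split => //=; rewrite /e /= Hw wb.
  - have [w Hw] := nd Y; case: (eqVneq w a) => [<-|wa].
      by exists [:: inl Y]; split => //=; rewrite /e /= Hw.
    by exists [:: inr w; inl Y]; split => //=; rewrite /e /= Hw eq_sym wa.
  - case: (eqVneq a b) => [<-|ab]; first exact: walk_nil.
    by exists [:: inr b]; split => //=; rewrite /e /= ab.
split; first exact: card1.
split.
  pose B := setX [set: Gp_vertex T k] [set (inr v : Gp_vertex T k) | v : T].
  have sub : edge_set e \subset [set [set q.1; q.2] | q in B].
    apply/subsetP => E /imsetP [[a b]]; rewrite inE /= => eab ->.
    case: b eab => [Y|v] eab.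
      case: a eab => [X|u] eab; first by [].
      apply/imsetP; exists (inl Y, inr u).
        by rewrite in_setX in_setT /=; apply/imsetP; exists u.
      by rewrite /= setUC.
    apply/imsetP; exists (a, inr v) => //.
    by rewrite in_setX in_setT /=; apply/imsetP; exists v.
  apply: leq_trans (subset_leq_card sub) _.
  apply: leq_trans (leq_imset_card _ _) _.
  rewrite cardsX cardsT card1.
  apply: leq_trans (_ : ('C(#|T|, k) + #|T|) * #|T| <= _).
    by rewrite leq_mul2l (leq_trans (leq_imset_card _ _)) ?cardsT ?orbT.
  rewrite expnSr mulnA mul2n -addnn leq_mul2r; apply/orP; right.
  by rewrite leq_add ?bin_le ?le_pow.
have [v0 _] : exists v0 : T, v0 \in T.
  by apply/card_gt0P; apply: leq_ltn_trans gtk.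
have := @ext_set T [set v0] setT k (subsetT _).
rewrite cards1 k_ge1 cardsT (ltnW gtk) => /(_ isT) [S0 [sS0 _ /eqP cS0]].
pose X0 : kset T k := exist _ S0 cS0.
have v0S0 : v0 \in S0 by rewrite -sub1set.
split.
  move=> nodom; split.
    move=> u v; case: u => [X|a]; last by apply: near; exists a; left.
    case: v => [Y|b]; last by apply: near; exists b; right.
    have : ~~ dominating adj (val X :|: val Y).
      apply/negP => dXY; apply: nodom; exists (val X :|: val Y); split => //.
      by rewrite mul2n -addnn cardsU (eqP (valP X)) (eqP (valP Y)) leq_subr.
    rewrite /dominating => /forallPn [w]; rewrite domU negb_or => /andP [wX wY].
    by exists [:: inr w; inl Y]; split => //=; rewrite /e /= wX wY.
  exists (inl X0), (inr v0); apply: walk_lb => -[|a [|b p]] //= sp.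
  by rewrite /e /=; case/andP => + _ H; rewrite H /= /dominates v0S0.
move=> [D [cD dD]].
have := @ext_set T set0 D (minn #|D| k) (sub0set _).
rewrite cards0 geq_minl => /(_ isT) [D1 [_ sD1 cD1]].
have := @ext_set T D1 setT k (subsetT _).
rewrite cD1 geq_minr cardsT (ltnW gtk) => /(_ isT) [S1 [sS1 _ /eqP cS1]].
have := @ext_set T (D :\: D1) setT k (subsetT _).
have cD2 : #|D :\: D1| <= k.
  rewrite cardsD (setIidPr sD1) cD1.
  move: cD; clear; lia.
rewrite cD2 cardsT (ltnW gtk) => /(_ isT) [S2 [sS2 _ /eqP cS2]].
pose X1 : kset T k := exist _ S1 cS1.
pose X2 : kset T k := exist _ S2 cS2.
have dom12 : forall w, dominates adj S1 w || dominates adj S2 w.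
  move=> w; rewrite -domU; apply: (@dom_sub T adj D); last by move/forallP: dD.
  apply/subsetP => x xD; rewrite in_setU; case: (boolP (x \in D1)) => xD1.
    by rewrite (subsetP sS1 _ xD1).
  by rewrite (subsetP sS2) ?orbT // in_setD xD1 xD.
split.
  move=> u v; case: u => [X|a]; last by apply: (@walk_le_mono _ e _ _ 2) => //; apply: near; exists a; left.
  case: v => [Y|b]; last by apply: (@walk_le_mono _ e _ _ 2) => //; apply: near; exists b; right.
  have [w1 H1] := nd X; have [w2 H2] := nd Y.
  case: (eqVneq w1 w2) => [e12|w12].
    subst w2; by exists [:: inr w1; inl Y]; split => //=; rewrite /e /= H1 H2.
  by exists [:: inr w1; inr w2; inl Y]; split => //=; rewrite /e /= H1 H2 w12.
exists (inl X1), (inl X2); apply: walk_lb => -[|a [|b [|c p]]] //= sp.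
- move=> _ [eS]; have /no_k_dom/negP : #|S1| <= k by rewrite (eqP cS1). apply.
  apply/forallP => w; have := dom12 w; by rewrite -eS orbb.
- by rewrite /e /=; case: a.
- rewrite /e /=; case: a => [Z|w] //=; case/andP => H1 /andP [H2 _] eb; subst b.
  move: H2; rewrite /e /= => H2.
  by move: (dom12 w); rewrite (negbTE H1) (negbTE H2).
Qed.
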